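(* For each $\sigma\in\mathfrak S(r)$, the $R$-linear map $\mathcal H_{n,r}\to\mathcal H_{n,r}$ defined on the basis $\{b_{\mathbf k}g_w\}$ by $b_{k_1,\ldots,k_n}g_w\mapsto b_{\sigma(k_1),\ldots,\sigma(k_n)}g_w$ (so that ${}^\sigma b_{\mathbf k}=b_{\sigma(k_1),\ldots,\sigma(k_n)}$ and ${}^\sigma g_w=g_w$) is an $R$-algebra automorphism of $\mathcal H_{n,r}$; these automorphisms define an action of $\mathfrak S(r)$ on $\mathcal H_{n,r}$ by $R$-algebra automorphisms.
   Context: Standing setup: $R$ is an integral domain, $n\ge 1$, $r\ge 1$, and $q,u_1,\ldots,u_r\in R$ with $q$ invertible in $R$ and $\Delta:=\prod_{1\le j<i\le r}(u_i-u_j)$ invertible in $R$. For $1\le c\le r$ let $F_c(X)\in R[X]$ be the unique polynomial of degree $\le r-1$ with $F_c(u_{c'})=\delta_{c,c'}\Delta$ for all $1\le c'\le r$. The modified Ariki–Koike (Shoji) algebra $\mathcal H_{n,r}=\mathcal H_{n,r}(R,q,u_1,\ldots,u_r)$ is the associative $R$-algebra generated by $t_1,\ldots,t_n,T_1,\ldots,T_{n-1}$ subject to: $(T_i-q)(T_i+q^{-1})=0$; $(t_i-u_1)\cdots(t_i-u_r)=0$; $T_iT_{i+1}T_i=T_{i+1}T_iT_{i+1}$; $T_iT_j=T_jT_i$ for $|i-j|\ge2$; $t_it_j=t_jt_i$; $T_jt_k=t_kT_j$ for $k\ne j,j+1$; and for $2\le j\le n$: $T_{j-1}t_j=t_{j-1}T_{j-1}+\Delta^{-2}\sum_{1\le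 c_1<c_2\le r}(u_{c_2}-u_{c_1})(q-q^{-1})F_{c_1}(t_{j-1})F_{c_2}(t_j)$ and $T_{j-1}t_{j-1}=t_jT_{j-1}-\Delta^{-2}\sum_{1\le c_1<c_2\le r}(u_{c_2}-u_{c_1})(q-q^{-1})F_{c_1}(t_{j-1})F_{c_2}(t_j)$. Write $[1,r]=\{1,\ldots,r\}$; $b_{\mathbf k}:=\prod_{i=1}^n\prod_{1\le j\le r,\,j\ne k_i}\frac{t_i-u_j}{u_{k_i}-u_j}$ for $\mathbf k\in[1,r]^n$; $B'_{i,j}:=-(q-q^{-1})\sum_{\mathbf k,\ k_i<k_j}b_{\mathbf k}$; $g_i:=T_i+B'_{i,i+1}$; for $w\in\mathfrak S(n)$ with reduced expression $s_{i_1}\cdots s_{i_l}$, $g_w:=g_{i_1}\cdots g_{i_l}$ (well defined). The set $\{b_{\mathbf k}g_w:\mathbf k\in[1,r]^n,w\in\mathfrak S(n)\}$ is an $R$-basis of $\mathcal H_{n,r}$. *)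

(* Defs.v *)
From HB Require Import structures.
From mathcomp Require Import all_boot all_order all_fingroup all_algebra.
Set Implicit Arguments. Unset Strict Implicit. Unset Printing Implicit Defensive.
Import GRing.Theory.
Local Open Scope ring_scope.

(* Conventions: t_1..t_n and T_1..T_(n-1) are indexed by nat, 1-based as in the
   paper (values at other indices are irrelevant).  The parameters u_1..u_r are
   indexed by 'I_r (0-based: u c for c : 'I_r stands for u_(c+1)).  Elements
   k of [1,r]^n are tuples k : n.-tuple 'I_r, with k_i = tnth k (i-1). *)

Section Shoji.
Variables (R : idomainType) (n r : nat) (q : R) (u : 'I_r -> R)
          (F : 'I_r -> {poly R}).

Definition Delta : R := \prod_(j < r) \prod_(i < r | (j < i)%N) (u i - u j).

Section InAlg.
Variable A : algType R.

Definition peval (p : {poly R}) (x : A) : A := \sum_(i < size p) p`_i *: x ^+ i.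

Definition corr (x y : A) : A :=
  \sum_(c1 < r) \sum_(c2 < r | (c1 < c2)%N)
     ((Delta ^- 2 * (u c2 - u c1) * (q - q^-1)) *: (peval (F c1) x * peval (F c2) y)).

Definition shoji_rel (t T : nat -> A) : Prop :=
  (forall i, (1 <= i <= n.-1)%N -> (T i - q%:A) * (T i + q^-1%:A) = 0) /\
      (forall i, (1 <= i <= n)%N -> \prod_(c < r) (t i - (u c)%:A) = 0) /\
      (forall i, (1 <= i)%N -> (i.+1 <= n.-1)%N ->
          T i * T i.+1 * T i = T i.+1 * T i * T i.+1) /\
      (forall i j, (1 <= i <= n.-1)%N -> (1 <= j <= n.-1)%N -> (i.+1 < j)%N || (j.+1 < i)%N ->
          T i * T j = T j * T i) /\
      (forall i j, (1 <= i <= n)%N -> (1 <= j <= n)%N -> t i * t j = t j * t i) /\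
      (forall j k, (1 <= j <= n.-1)%N -> (1 <= k <= n)%N -> k != j -> k != j.+1 ->
          T j * t k = t k * T j) /\
      (forall j, (2 <= j <= n)%N ->
          T j.-1 * t j = t j.-1 * T j.-1 + corr (t j.-1) (t j) /\
          T j.-1 * t j.-1 = t j * T j.-1 - corr (t j.-1) (t j)).
End InAlg.

(* (A, t, T) is a presentation of H_{n,r}: universal among R-algebras with
   elements satisfying the relations. *)
Definition shoji_universal (A : algType R) (t T : nat -> A) : Prop :=
  shoji_rel t T /\
  forall (B : algType R) (tB TB : nat -> B), shoji_rel tB TB ->
    exists f : {lrmorphism A -> B},
      [/\ (forall i, (1 <= i <= n)%N -> f (t i) = tB i),
          (forall i, (1 <= i <= n.-1)%N -> f (T i) = TB i) &
          forall g : {lrmorphism A -> B},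
            (forall i, (1 <= i <= n)%N -> g (t i) = tB i) ->
            (forall i, (1 <= i <= n.-1)%N -> g (T i) = TB i) -> g =1 f].

Section Elements.
Variables (A : algType R) (t T : nat -> A).

Definition bk (k : n.-tuple 'I_r) : A :=
  \prod_(i < n) \prod_(j < r | j != tnth k i)
     ((u (tnth k i) - u j)^-1 *: (t i.+1 - (u j)%:A)).

(* k_i as a natural number (1-based i); only used for comparisons k_i < k_j *)
Definition kv (k : n.-tuple 'I_r) (i : nat) : nat := nth 0%N (map val k) i.-1.

Definition Bp (i j : nat) : A :=
  - (q - q^-1) *: \sum_(k : n.-tuple 'I_r | (kv k i < kv k j)%N) bk k.

Definition gi (i : nat) : A := T i + Bp i i.+1.

Definition gword (s : seq nat) : A := \prod_(i <- s) gi i.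
End Elements.
End Shoji.

(* simple reflection s_i (1 <= i <= n-1) acting on {0,...,n-1} = 'I_n
   (positions i-1 and i, 0-based, i.e. i and i+1, 1-based) *)
Definition sref (n : nat) (i : nat) (j : 'I_n) : 'I_n :=
  insubd j (if val j == i.-1 then i else if val j == i then i.-1 else val j).

Definition wfun (n : nat) (s : seq nat) (j : 'I_n) : 'I_n :=
  foldr (fun i x => sref i x) j s.

Definition expr_of (n : nat) (s : seq nat) (w : 'S_n) : Prop :=
  all (fun i => (0 < i < n)%N) s /\ forall j, w j = wfun s j.

Definition reduced_expr (n : nat) (s : seq nat) (w : 'S_n) : Prop :=
  expr_of s w /\ forall s', expr_of s' w -> (size s <= size s')%N.

(* Main.v *)
Require Import Defs.
From HB Require Import structures.
From mathcomp Require Import all_boot all_order all_fingroup all_algebra.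
From mathcomp Require Import ring zify.
From Stdlib Require Import ClassicalEpsilon.
Set Implicit Arguments. Unset Strict Implicit. Unset Printing Implicit Defensive.
Import GRing.Theory.
Local Open Scope ring_scope.

Section S.
Variables (R : idomainType) (n' r' : nat) (q : R) (u : 'I_r'.+1 -> R)
  (F : 'I_r'.+1 -> {poly R}) (A : algType R) (t T : nat -> A).
Local Notation n := n'.+1.
Local Notation r := r'.+1.
Local Notation K := (n.-tuple 'I_r).
Hypotheses (Uq : q \is a GRing.unit) (UD : Delta u \is a GRing.unit)
  (hF : forall c c', (F c).[u c'] = (c == c')%:R * Delta u)
  (hrel : shoji_rel n q u F t T).

Definition pos (k : K) (p : nat) : 'I_r := nth ord0 k p.

Lemma eq_pos (k l : K) : (forall p, (p < n)%N -> pos k p = pos l p) -> k = l.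
Proof. by move=> h; apply: eq_from_tnth => i; rewrite !(tnth_nth ord0); apply: h. Qed.

Lemma neq_pos (k l : K) : k != l -> exists2 p, (p < n)%N & pos k p != pos l p.
Proof.
move=> kl; have: ~~ [forall p : 'I_n, pos k p == pos l p].
  apply: contra kl => /forallP h; apply/eqP/eq_pos => p hp; exact/eqP/(h (Ordinal hp)).
by rewrite negb_forall => /existsP[p hp]; exists p.
Qed.
Arguments neq_pos [k l].

Lemma pos_map (s : {perm 'I_r}) (k : K) p : (p < n)%N -> pos (map_tuple s k) p = s (pos k p).
Proof. by move=> hp; rewrite /pos /= (nth_map ord0) // size_tuple. Qed.

Lemma kvE (k : K) i : kv k i = pos k i.-1.
Proof.
rewrite /kv /pos; case: (ltnP i.-1 n) => h.
  by rewrite (nth_map ord0) // size_tuple.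
by rewrite !nth_default ?size_map ?size_tuple.
Qed.

Definition swp (j p : nat) : nat := if p == j.-1 then j else if p == j then j.-1 else p.
Definition sw (j : nat) (k : K) : K := [tuple pos k (swp j (val p)) | p < n].

Lemma pos_sw j k p : (0 < j < n)%N -> pos (sw j k) p = pos k (swp j p).
Proof.
move=> /andP[j0 jn]; case: (ltnP p n) => hp.
  by rewrite /pos -(tnth_nth ord0 _ (Ordinal hp)) tnth_mktuple.
rewrite /pos nth_default ?size_tuple //.
have -> : swp j p = p by rewrite /swp; case: eqP => [e|_]; [lia|case: eqP => //; lia].
by rewrite nth_default ?size_tuple.
Qed.

Lemma swpK j p : (0 < j)%N -> swp j (swp j p) = p.
Proof.
move=> j0; rewrite /swp; case: (eqVneq p j.-1) => [->|h1].
  by rewrite eqxx; case: eqP => //; lia.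
case: (eqVneq p j) => [->|h2]; first by rewrite eqxx.
by rewrite (negbTE h1) (negbTE h2).
Qed.

Lemma swK j : (0 < j < n)%N -> involutive (sw j).
Proof. by move=> hj k; apply: eq_pos => p _; rewrite !pos_sw // swpK //; case/andP: hj. Qed.


Lemma unit_du (a b : 'I_r) : a != b -> (u a - u b) \is a GRing.unit.
Proof.
have key : forall i j : 'I_r, (j < i)%N -> (u i - u j) \is a GRing.unit.
  move=> i j ji; move/unitr_prodP: UD => /(_ j (mem_index_enum _) isT).
  by move/unitr_prodP => /(_ i (mem_index_enum _) ji).
move=> ab; case: (ltngtP a b) => h.
- by rewrite -opprB unitrN key.
- exact: key.
- by move: ab; rewrite (val_inj h) eqxx.
Qed.

Lemma u_inj : injective u.
Proof.
move=> a b e; apply/eqP; apply: contraT => ab.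
by have := unit_du ab; rewrite e subrr unitr0.
Qed.

Definition Lp (a : 'I_r) : {poly R} :=
  \prod_(j < r | j != a) ((u a - u j)^-1 *: ('X - (u j)%:P)).

Lemma Lp_val a b : (Lp a).[u b] = (a == b)%:R.
Proof.
rewrite /Lp horner_prod; case: (eqVneq a b) => [<-|ab].
  by rewrite big1 // => j ja; rewrite hornerZ hornerXsubC mulVr // unit_du // eq_sym ja.

by rewrite (bigD1 b) //= 1?eq_sym // hornerZ hornerXsubC subrr mulr0 mul0r.
Qed.

Lemma Lp_sum : exists Q, 1 - \sum_a Lp a = Q * \prod_(a < r) ('X - (u a)%:P).
Proof.
have H1 : all (root (1 - \sum_a Lp a)) (map u (enum 'I_r)).
  apply/allP => x /mapP [b _ ->]; rewrite /root hornerD hornerN hornerC horner_sum.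
  rewrite (bigD1 b) //= big1 ?Lp_val ?eqxx ?addr0 ?subrr // => a ab.
  by rewrite Lp_val (negbTE ab).
have H2 : uniq_roots (map u (enum 'I_r)).
  elim: (enum 'I_r) (enum_uniq 'I_r) => //= x s IH /andP[xs us].
  rewrite IH // andbT; apply/allP => _ /mapP[y ys ->].
  rewrite /diff_roots mulrC eqxx unit_du //.
  by apply: contraNN xs => /eqP <-.
have [Q HQ] := uniq_roots_prod_XsubC H1 H2.
by exists Q; rewrite HQ big_map big_enum.
Qed.

Definition Lt i a : A := horner_alg (t i) (Lp a).

Lemma tprod i : (1 <= i <= n)%N -> horner_alg (t i) (\prod_(c < r) ('X - (u c)%:P)) = 0.
Proof.
case: hrel => _ [h2 _] hi; rewrite rmorph_prod -(h2 i hi); apply: eq_bigr => c _.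
by rewrite rmorphB /= horner_algX horner_algC.
Qed.

Lemma sumL i : (1 <= i <= n)%N -> \sum_a Lt i a = 1.
Proof.
move=> hi; have [Q HQ] := Lp_sum.
have := congr1 (horner_alg (t i)) HQ.
rewrite rmorphM /= tprod // mulr0 rmorphB rmorph1 rmorph_sum /= => /eqP.
by rewrite subr_eq0 => /eqP <-.
Qed.

Lemma tL i a : (1 <= i <= n)%N -> t i * Lt i a = u a *: Lt i a.
Proof.
move=> hi; apply/eqP; rewrite -subr_eq0 -mulr_algl -mulrBl.
have -> : t i - (u a)%:A = horner_alg (t i) ('X - (u a)%:P).
  by rewrite rmorphB /= horner_algX horner_algC.
rewrite /Lt -rmorphM /Lp scaler_prod -scalerAr.
have <- : \prod_(c < r) ('X - (u c)%:P) = ('X - (u a)%:P) * \prod_(j < r | j != a) ('X - (u j)%:P).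
  by rewrite (bigD1 a).
by rewrite -mul_polyC rmorphM /= tprod // mulr0.
Qed.

Lemma horner_eig (x y : A) c p : x * y = c *: y -> horner_alg x p * y = p.[c] *: y.
Proof.
move=> hxy; elim/poly_ind: p => [|p a IH].
  by rewrite rmorph0 mul0r horner0 scale0r.
rewrite rmorphD rmorphM /= horner_algX horner_algC mulrDl -mulrA hxy -scalerAr IH.
by rewrite scalerA mulr_algl -scalerDl hornerMXaddC mulrC.
Qed.

Lemma comm_horner (x y : A) p : GRing.comm x y -> GRing.comm x (horner_alg y p).
Proof.
move=> hxy; elim/poly_ind: p => [|p a IH]; first by rewrite rmorph0; apply: commr0.
rewrite rmorphD rmorphM /= horner_algX horner_algC.
by apply: commrD; [apply: commrM|apply: commr_sym; apply: comm_alg].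
Qed.

Lemma comm_tt i j : (1 <= i <= n)%N -> (1 <= j <= n)%N -> GRing.comm (t i) (t j).
Proof. by case: hrel => _ [_ [_ [_ [h5 _]]]] hi hj; rewrite /GRing.comm h5. Qed.

Lemma comm_tL i j a : (1 <= i <= n)%N -> (1 <= j <= n)%N -> GRing.comm (t j) (Lt i a).
Proof. by move=> hi hj; apply: comm_horner; apply: comm_tt. Qed.

Local Notation e := (bk u t).

Lemma bkE k : e k = \prod_(p < n) Lt p.+1 (pos k p).
Proof.
apply: eq_bigr => p _; rewrite /Lt /Lp rmorph_prod (tnth_nth ord0); apply: eq_bigr => j _.
by rewrite -mul_polyC rmorphM rmorphB /= horner_algX !horner_algC mulr_algl.
Qed.

Lemma prod_eig m (Y : 'I_m -> A) x (j : 'I_m) c :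
  (forall p, GRing.comm x (Y p)) -> x * Y j = c *: Y j ->
  x * \prod_(p < m) Y p = c *: \prod_(p < m) Y p.
Proof.
elim: m Y j => [|m IH] Y j hc hj; first by case: j hj.
rewrite big_ord_recr /=; case: (ltnP j m) => hjm.
  have E : widen_ord (leqnSn m) (Ordinal hjm) = j by apply: val_inj.
  have IH' := IH (fun p => Y (widen_ord (leqnSn m) p)) (Ordinal hjm).
  rewrite /= E in IH'; by rewrite mulrA IH' // -scalerAl.
have Ej : j = ord_max by apply: val_inj; move: (ltn_ord j); rewrite /= ltnS => h; apply/eqP; rewrite eqn_leq h.
rewrite Ej in hj.
have C : GRing.comm x (\prod_(i < m) Y (widen_ord (leqnSn m) i)) by apply: commr_prod => p _; apply: hc.
rewrite mulrA C -mulrA hj.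
by rewrite -scalerAr.
Qed.

Lemma prod_act m (Y : 'I_m -> A) y (c : 'I_m -> R) :
  (forall p, Y p * y = c p *: y) -> (\prod_(p < m) Y p) * y = (\prod_(p < m) c p) *: y.
Proof.
elim: m Y c => [|m IH] Y c h; first by rewrite !big_ord0 mul1r scale1r.
rewrite !big_ord_recr /= -mulrA h -scalerAr (IH _ (fun p => c (widen_ord (leqnSn m) p))) ?scalerA ?(mulrC (c ord_max)) // => p; exact: h.
Qed.

Lemma te i (l : K) : (1 <= i <= n)%N -> t i * e l = u (pos l i.-1) *: e l.
Proof.
move=> hi; rewrite bkE; have hi' : (i.-1 < n)%N by case/andP: hi; case: i.
apply: (prod_eig (j := Ordinal hi')).
  by move=> p; apply: comm_tL => //; rewrite ltnS ltn_ord.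
have i1 : (0 < i)%N by case/andP: hi.
by rewrite /= prednK // tL.
Qed.

Lemma comm_te i (l : K) : (1 <= i <= n)%N -> GRing.comm (t i) (e l).
Proof.
move=> hi; rewrite bkE; apply: commr_prod => p _; apply: comm_tL => //.
by rewrite ltnS ltn_ord.
Qed.

Lemma et i (l : K) : (1 <= i <= n)%N -> e l * t i = u (pos l i.-1) *: e l.
Proof. by move=> hi; rewrite -comm_te // te. Qed.

Lemma ee (k l : K) : e k * e l = (k == l)%:R *: e l.
Proof.
rewrite {1}bkE (prod_act (c := fun p => (Lp (pos k p)).[u (pos l p)])); last first.
  move=> p; apply: horner_eig; rewrite te //; by rewrite ltnS ltn_ord.
congr (_ *: _); case: (eqVneq k l) => [<-|kl].
  by rewrite big1 // => p _; rewrite Lp_val eqxx.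
have [p hp hne] := neq_pos kl.
by rewrite (bigD1 (Ordinal hp)) //= Lp_val (negbTE hne) mul0r.
Qed.

Lemma sume : \sum_(k : K) e k = 1.
Proof.
have -> : 1 = \prod_(p < n) \sum_a Lt p.+1 a.
  by rewrite big1 // => p _; rewrite sumL // ltnS ltn_ord.
rewrite bigA_distr_bigA /=.
rewrite (reindex (fun k : K => [ffun p : 'I_n => tnth k p])); last first.
  exists (fun f : {ffun 'I_n -> 'I_r} => [tuple f p | p < n]) => x _.
    by apply: eq_from_tnth => p; rewrite tnth_mktuple ffunE.
  by apply/ffunP => p; rewrite !ffunE tnth_mktuple.
by apply: eq_bigr => k _; rewrite bkE; apply: eq_bigr => p _; rewrite ffunE (tnth_nth ord0).
Qed.


Definition dg (f : K -> R) : A := \sum_(k : K) f k *: e k.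

Lemma dg_e f l : dg f * e l = f l *: e l.
Proof.
rewrite /dg mulr_suml (bigD1 l) //= big1 ?addr0.
  by rewrite -scalerAl ee eqxx scale1r.
by move=> k kl; rewrite -scalerAl ee (negbTE kl) scale0r scaler0.
Qed.

Lemma e_dg f l : e l * dg f = f l *: e l.
Proof.
rewrite /dg mulr_sumr (bigD1 l) //= big1 ?addr0.
  by rewrite -scalerAr ee eqxx scale1r.
by move=> k kl; rewrite -scalerAr ee eq_sym (negbTE kl) !scale0r scaler0.
Qed.

Lemma dgM f h : dg f * dg h = dg (fun k => f k * h k).
Proof.
rewrite {2}/dg mulr_sumr; apply: eq_bigr => k _.
by rewrite -scalerAr dg_e scalerA mulrC.
Qed.

Lemma dgD f h : dg f + dg h = dg (fun k => f k + h k).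
Proof. by rewrite /dg -big_split; apply: eq_bigr => k _; rewrite scalerDl. Qed.

Lemma dgN f : - dg f = dg (fun k => - f k).
Proof. by rewrite /dg -sumrN; apply: eq_bigr => k _; rewrite scaleNr. Qed.

Lemma dgZ a f : a *: dg f = dg (fun k => a * f k).
Proof. by rewrite /dg scaler_sumr; apply: eq_bigr => k _; rewrite scalerA. Qed.

Lemma dgC a : dg (fun _ => a) = a%:A.
Proof. by rewrite /dg -scaler_sumr sume. Qed.

Lemma dg1 : dg (fun _ => 1) = 1.
Proof. by rewrite dgC scale1r. Qed.

Lemma dg0 : dg (fun _ => 0) = 0.
Proof. by rewrite dgC scale0r. Qed.

Lemma eq_dg f h : f =1 h -> dg f = dg h.
Proof. by move=> fh; apply: eq_bigr => k _; rewrite fh. Qed.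

Lemma dg_sum (I : Type) (s : seq I) (P : pred I) (G : I -> K -> R) :
  \sum_(i <- s | P i) dg (G i) = dg (fun k => \sum_(i <- s | P i) G i k).
Proof.
rewrite /dg exchange_big /=; apply: eq_bigr => k _; by rewrite scaler_suml.
Qed.

Lemma dg_prod (I : Type) (s : seq I) (P : pred I) (G : I -> K -> R) :
  \prod_(i <- s | P i) dg (G i) = dg (fun k => \prod_(i <- s | P i) G i k).
Proof.
elim: s => [|x s IH]; first by rewrite big_nil -dg1; apply: eq_dg => k; rewrite big_nil.
rewrite big_cons IH; case Px: (P x).
  by rewrite dgM; apply: eq_dg => k; rewrite big_cons Px.
by apply: eq_dg => k; rewrite big_cons Px.
Qed.

Lemma dg_exp f m : dg f ^+ m = dg (fun k => f k ^+ m).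
Proof.
elim: m => [|m IH]; first by rewrite expr0 -dg1.
by rewrite exprS IH dgM; apply: eq_dg => k; rewrite exprS.
Qed.

Lemma peval_dg p f : peval p (dg f) = dg (fun k => p.[f k]).
Proof.
rewrite /peval; under eq_bigr => i _ do rewrite dg_exp dgZ.
by rewrite dg_sum; apply: eq_dg => k; rewrite horner_coef.
Qed.

Lemma tE i : (1 <= i <= n)%N -> t i = dg (fun k => u (pos k i.-1)).
Proof.
move=> hi; rewrite -[t i]mulr1 -sume mulr_sumr; apply: eq_bigr => k _; exact: te.
Qed.

Lemma decomp x : x = \sum_(l : K) e l * x.
Proof. by rewrite -mulr_suml sume mul1r. Qed.

Lemma decompr x : x = \sum_(l : K) x * e l.
Proof. by rewrite -mulr_sumr sume mulr1. Qed.

Lemma corr_val (x y : 'I_r) :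
  \sum_(c1 < r) \sum_(c2 < r | (c1 < c2)%N)
     (Delta u ^- 2 * (u c2 - u c1) * (q - q^-1)) * ((F c1).[u x] * (F c2).[u y])
  = (x < y)%:R * ((u y - u x) * (q - q^-1)).
Proof.
have D2 : Delta u ^- 2 * (Delta u * Delta u) = 1 by rewrite -expr2 mulVr // unitrX.
rewrite (bigD1 x) //= [X in _ + X]big1 ?addr0; last first.
  move=> c1 c1x; apply: big1 => c2 _; by rewrite !hF (negbTE c1x) !mul0r mulr0.
case: (ltnP x y) => xy.
  rewrite (bigD1 y) //= [X in _ + X]big1 ?addr0; last first.
    move=> c2 /andP[_ c2y]; by rewrite !hF (negbTE c2y) !mul0r !mulr0.
  rewrite !hF !eqxx /= mulr1n !mul1r.
  transitivity ((Delta u ^- 2 * (Delta u * Delta u)) * ((u y - u x) * (q - q^-1))); first by ring.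
  by rewrite D2 mul1r.
rewrite big1 ?mul0r // => c2 xc2; rewrite !hF.
case: (eqVneq c2 y) => [e|ne]; last by rewrite /= mulr0n !mul0r !mulr0.
by move: xc2; rewrite e ltnNge xy.
Qed.

Lemma corr_dg (X Y : K -> 'I_r) :
  corr q u F (dg (fun k => u (X k))) (dg (fun k => u (Y k))) =
  dg (fun k => (X k < Y k)%:R * ((u (Y k) - u (X k)) * (q - q^-1))).
Proof.
rewrite /corr; under eq_bigr => c1 _ do under eq_bigr => c2 _ do rewrite !peval_dg dgM dgZ.
under eq_bigr => c1 _ do rewrite dg_sum.
rewrite dg_sum; apply: eq_dg => k; exact: corr_val.
Qed.


Local Notation g := (gi n q u t T).
Local Notation c := (q - q^-1).

Lemma BpE j : Bp n q u t j j.+1 = dg (fun k => - c * (pos k j.-1 < pos k j)%:R).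
Proof.
rewrite /Bp big_mkcond scaler_sumr; apply: eq_bigr => k _ /=.
rewrite !kvE /=; case: ifP => _; first by rewrite mulr1.
by rewrite mulr0 scale0r scaler0.
Qed.

Lemma bR1 : (true%:R : R) = 1. Proof. by []. Qed.
Lemma bR0 : (false%:R : R) = 0. Proof. by []. Qed.

Lemma scale_unit_eq0 (a : R) (x : A) : a \is a GRing.unit -> a *: x = 0 -> x = 0.
Proof. by move=> ua h; rewrite -[x]scale1r -(mulVr ua) -scalerA h scaler0. Qed.

Lemma sandL (l k : K) x m : (1 <= m <= n)%N ->
  e l * (x * t m) * e k = u (pos k m.-1) *: (e l * x * e k).
Proof. by move=> hm; rewrite -!mulrA te // !scalerAr. Qed.

Lemma sandR (l k : K) x m : (1 <= m <= n)%N ->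
  e l * (t m * x) * e k = u (pos l m.-1) *: (e l * x * e k).
Proof. by move=> hm; rewrite !mulrA et // -!scalerAl. Qed.

Lemma sandD (l k : K) f : e l * dg f * e k = (l == k)%:R *: (f k *: e k).
Proof.
rewrite e_dg -scalerAl ee; case: (eqVneq l k) => [->|nlk]; first by rewrite !scale1r.
by rewrite !scale0r scaler0.
Qed.

Lemma key j (k l : K) : (1 <= j <= n.-1)%N -> l != sw j k -> e l * g j * e k = 0.
Proof.
move=> hj lk.
have hj' : (0 < j < n)%N by move: hj; rewrite /=; lia.
have [_ [_ [_ [_ [_ [h6 h7]]]]]] := hrel.
have hj2 : (2 <= j.+1 <= n)%N by move: hj; rewrite /=; lia.
have [h7a h7b] := h7 _ hj2; rewrite /= in h7a h7b.
set D := e l * T j * e k.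
have F1 m : (1 <= m <= n)%N -> m != j -> m != j.+1 ->
    (u (pos k m.-1) - u (pos l m.-1)) *: D = 0.
  move=> hm mj mj1; have := congr1 (fun x => e l * x * e k) (h6 _ _ hj hm mj mj1).
  rewrite /= sandL // sandR // -/D => /eqP; rewrite -subr_eq0 -scalerBl.
  by move/eqP.
have tj : (1 <= j <= n)%N by move: hj; rewrite /=; lia.
have tj1 : (1 <= j.+1 <= n)%N by move: hj; rewrite /=; lia.
set cc := fun k : K => ((pos k j.-1 < pos k j)%:R * ((u (pos k j) - u (pos k j.-1)) * c)).
have Ecorr : corr q u F (t j) (t j.+1) = dg cc by rewrite !tE // corr_dg.
have F2 : (u (pos k j) - u (pos l j.-1)) *: D = (l == k)%:R *: (cc k *: e k).
  have := congr1 (fun x => e l * x * e k) h7a; rewrite Ecorr /=.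
  rewrite sandL // mulrDr mulrDl sandR // sandD -/D.
  by move=> /= H; rewrite scalerBl H addrAC subrr add0r.
have F3 : (u (pos k j.-1) - u (pos l j)) *: D = - ((l == k)%:R *: (cc k *: e k)).
  have := congr1 (fun x => e l * x * e k) h7b; rewrite Ecorr /=.
  rewrite sandL // mulrBr mulrBl sandR // sandD -/D.
  by move=> /= H; rewrite scalerBl H addrAC subrr add0r.
rewrite /gi BpE mulrDr mulrDl sandD -/D.
case: (eqVneq l k) => [elk|nlk].
  subst l.
  have nsw : pos k j.-1 != pos k j.
    apply: contraNN lk => /eqP E; apply/eqP/eq_pos => p hp; rewrite pos_sw //.
    rewrite /swp; case: eqP => [->|_]; first by rewrite E.
    by case: eqP => [->|_] //.
  rewrite eqxx scale1r in F2.
  have ud : (u (pos k j) - u (pos k j.-1)) \is a GRing.unit by rewrite unit_du // eq_sym.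
  have -> : D = ((pos k j.-1 < pos k j)%:R * c) *: e k.
    apply/eqP; rewrite -subr_eq0; apply/eqP; apply: (scale_unit_eq0 ud).
    rewrite scalerBr F2 /cc !scalerA.
    by rewrite mulrCA subrr.
  by rewrite bR1 scale1r -scalerDl mulNr [_ * c]mulrC addrN scale0r.
rewrite bR0 scale0r addr0.
have [p hp hne] := neq_pos lk.
rewrite pos_sw // in hne.
move: hne; rewrite /swp; case: (eqVneq p j.-1) => [pj|pj].
  move=> hne; apply: (scale_unit_eq0 (unit_du hne)).
  by apply/eqP; rewrite -oppr_eq0 -scaleNr opprB pj F2 (negbTE nlk) bR0 scale0r.
case: (eqVneq p j) => [pj2|pj2] hne.
  apply: (scale_unit_eq0 (unit_du hne)).
  by apply/eqP; rewrite -oppr_eq0 -scaleNr opprB pj2 F3 (negbTE nlk) bR0 scale0r ?oppr0.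
apply: (scale_unit_eq0 (unit_du hne)).
apply/eqP; rewrite -oppr_eq0 -scaleNr opprB; apply/eqP.
have := F1 p.+1; rewrite /=; apply; move: hp pj pj2 hj; rewrite /=; lia.
Qed.

Lemma gE j (k : K) : (1 <= j <= n.-1)%N -> g j * e k = e (sw j k) * g j.
Proof.
move=> hj; have hj' : (0 < j < n)%N by move: hj; rewrite /=; lia.
have L1 : g j * e k = e (sw j k) * g j * e k.
  rewrite [LHS]decomp (bigD1 (sw j k)) //= big1 ?addr0 ?mulrA // => l hl.
  by rewrite mulrA key.
rewrite L1 [RHS]decompr (bigD1 k) //= big1 ?addr0 // => m hm.
apply: key => //; apply: contraNN hm => /eqP E.
by apply/eqP; apply: (can_inj (swK hj')).
Qed.

Lemma gD j f : (1 <= j <= n.-1)%N -> g j * dg f = dg (fun k => f (sw j k)) * g j.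
Proof.
move=> hj; have hj' : (0 < j < n)%N by move: hj; rewrite /=; lia.
rewrite /dg mulr_sumr mulr_suml.
rewrite [RHS](reindex_inj (can_inj (swK hj'))) /=.
by apply: eq_bigr => k _; rewrite -scalerAr gE // swK // scalerAl.
Qed.


Fact gL_key : unit. Proof. exact: tt. Qed.
Definition gL := locked_with gL_key (gi n q u t T).
Lemma gLE j : gL j = g j. Proof. by rewrite /gL unlock. Qed.

Definition eps (v : {perm 'I_r}) j (k : K) : bool := (v (pos k j.-1) < v (pos k j))%N.
Definition pv (v : {perm 'I_r}) j (k : K) : R := - c * (eps v j k)%:R.
Definition XS (v : {perm 'I_r}) j : A := gL j - dg (pv v j).
Definition tS (v : {perm 'I_r}) i : A := dg (fun k => u (v (pos k i.-1))).
Definition cE j (k : K) : R := c * (pos k j.-1 == pos k j)%:R.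

Lemma XS1 j : XS 1 j = T j.
Proof.
rewrite /XS gLE /gi BpE -addrA dgN dgD -[RHS]addr0; congr (_ + _).
rewrite -dg0; apply: eq_dg => k; rewrite /pv /eps !perm1; ring.
Qed.

Lemma tS1 i : (1 <= i <= n)%N -> tS 1 i = t i.
Proof. by move=> hi; rewrite tE //; apply: eq_dg => k; rewrite perm1. Qed.

Definition M (ws : seq A) (G : nat -> K -> R) : A :=
  \sum_(i < size ws) dg (G i) * nth 0 ws i.
Definition slot (i : nat) (f : K -> R) : nat -> K -> R :=
  fun j k => if j == i then f k else 0.

Lemma MD ws G H : M ws G + M ws H = M ws (fun i k => G i k + H i k).
Proof. by rewrite /M -big_split; apply: eq_bigr => i _ /=; rewrite -mulrDl dgD. Qed.

Lemma MN ws G : - M ws G = M ws (fun i k => - G i k).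
Proof. by rewrite /M -sumrN; apply: eq_bigr => i _; rewrite -mulNr dgN. Qed.

Lemma eq_M ws G H : (forall i k, (i < size ws)%N -> G i k = H i k) -> M ws G = M ws H.
Proof. by move=> h; apply: eq_bigr => i _; congr (_ * _); apply: eq_dg => k; apply: h. Qed.

Lemma Mslot ws i f : (i < size ws)%N -> dg f * nth 0 ws i = M ws (slot i f).
Proof.
move=> hi; rewrite /M (bigD1 (Ordinal hi)) //= big1 ?addr0.
  by congr (_ * _); apply: eq_dg => k; rewrite /slot eqxx.
move=> j hj; rewrite (_ : dg _ = 0) ?mul0r // -dg0; apply: eq_dg => k.
by rewrite /slot; case: eqP => // E; move: hj; rewrite -val_eqE /= E eqxx.
Qed.

Lemma mAr (x y z : A) : x * y * z = x * (y * z).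
Proof. by rewrite mulrA. Qed.

Lemma dgM' f h (X : A) : dg f * (dg h * X) = dg (fun k => f k * h k) * X.
Proof. by rewrite mulrA dgM. Qed.

Lemma gLD j f : (1 <= j <= n.-1)%N ->
  gL j * dg f = dg (fun k => f (sw j k)) * gL j.
Proof. by move=> hj; rewrite gLE gD. Qed.

Lemma gD' j f (X : A) : (1 <= j <= n.-1)%N ->
  gL j * (dg f * X) = dg (fun k => f (sw j k)) * (gL j * X).
Proof. by move=> hj; rewrite mulrA gLD // mulrA. Qed.

Lemma dgZl a f (X : A) : a *: (dg f * X) = dg (fun k => a * f k) * X.
Proof. by rewrite scalerAl dgZ. Qed.

Lemma scale_dg a (X : A) : a *: X = dg (fun _ => a) * X.
Proof. by rewrite dgC mulr_algl. Qed.

Lemma quad_eq (X : A) : (X - q%:A) * (X + q^-1%:A) = X * X - c *: X - 1.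
Proof.
rewrite mulrDr !mulrBl !mulr_algr !mulr_algl scalerA mulVr // scale1r scalerBl opprB.
by rewrite addrA; congr (_ - _); rewrite addrAC -addrA.
Qed.


Lemma swp_l j : swp j j.-1 = j.
Proof. by rewrite /swp eqxx. Qed.
Lemma swp_r j : (0 < j)%N -> swp j j = j.-1.
Proof.
move=> j0; rewrite /swp; have -> : (j == j.-1) = false by apply/eqP; lia.
by rewrite eqxx.
Qed.
Lemma swp_id j p : p != j.-1 -> p != j -> swp j p = p.
Proof. by move=> h1 h2; rewrite /swp (negbTE h1) (negbTE h2). Qed.

Lemma perm_val_eq (v : {perm 'I_r}) (a b : 'I_r) :
  (a == b) = ((v a : nat) == v b).
Proof. by rewrite val_eqE (inj_eq perm_inj). Qed.

Lemma eps_sw v j k : (0 < j < n)%N -> eps v j (sw j k) = (v (pos k j) < v (pos k j.-1))%N.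
Proof. by move=> hj; rewrite /eps !pos_sw // swp_l swp_r //; case/andP: hj. Qed.

Lemma quad_gen v j : (1 <= j <= n.-1)%N ->
  XS v j * XS v j - c *: XS v j - 1 = gL j * gL j - dg (cE j) * gL j - 1.
Proof.
move=> hj; have hj' : (0 < j < n)%N by move: hj; rewrite /=; lia.
have j0 : (0 < j)%N by case/andP: hj.
pose ws := [:: 1; gL j; gL j * gL j].
have S0 f : dg f = M ws (slot 0 f) by rewrite -(@Mslot ws 0 f) ?mulr1.
have S1 f : dg f * gL j = M ws (slot 1 f) := @Mslot ws 1 f isT.
have S2 f : dg f * (gL j * gL j) = M ws (slot 2 f) := @Mslot ws 2 f isT.
have P1 : gL j = M ws (slot 1 (fun _ => 1)) by rewrite -S1 dg1 mul1r.
have P2 : gL j * gL j = M ws (slot 2 (fun _ => 1)) by rewrite -S2 dg1 mul1r.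
have P0 : 1 = M ws (slot 0 (fun _ => 1)) by rewrite -S0 dg1.
rewrite /XS scale_dg.
rewrite ?(mulrDl, mulrDr, mulrBl, mulrBr, mulNr, mulrN, opprK, mAr, mulr1, mul1r,
          gD' _ _ hj, gLD _ hj, dgM, dgM').
rewrite ?S2 ?S1 ?P2 ?P1 ?S0 P0.
rewrite ?(MN, MD); apply: eq_M => i k hi.
case: i hi => [|[|[|i]]] // _; rewrite /slot /= /pv /cE ?eps_sw // /eps ?(perm_val_eq v);
  move: (nat_of_ord (v (pos k j.-1))) (nat_of_ord (v (pos k j))) => x y;
  case: (ltngtP x y) => h; rewrite ?bR0 ?bR1 /=; ring.
Qed.


Lemma gg j : (1 <= j <= n.-1)%N -> gL j * gL j = dg (cE j) * gL j + 1.
Proof.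
move=> hj; have [h1 _] := hrel.
have := h1 j hj; rewrite -XS1 quad_eq quad_gen // => /eqP.
by rewrite subr_eq add0r subr_eq => /eqP ->; rewrite addrC.
Qed.

Lemma gg' j (X : A) : (1 <= j <= n.-1)%N -> gL j * (gL j * X) = dg (cE j) * (gL j * X) + X.
Proof. by move=> hj; rewrite mulrA gg // mulrDl mul1r mulrA. Qed.

Lemma quadS v j : (1 <= j <= n.-1)%N -> (XS v j - q%:A) * (XS v j + q^-1%:A) = 0.
Proof. by move=> hj; rewrite quad_eq quad_gen // gg // addrAC addrK subrr. Qed.

Lemma swp_n j : swp j j.+1 = j.+1.
Proof. by rewrite /swp; case: eqP => [|_]; [lia|case: eqP => //; lia]. Qed.
Lemma swp_pp j : (0 < j)%N -> swp j.+1 j.-1 = j.-1.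
Proof. by move=> j0; rewrite /swp; case: eqP => [/=|_]; [lia|case: eqP => //; lia]. Qed.
Lemma swp_l1 j : swp j.+1 j = j.+1.
Proof. exact: swp_l. Qed.
Lemma swp_r1 j : swp j.+1 j.+1 = j.
Proof. exact: swp_r. Qed.

Lemma braid_gen v i : (1 <= i)%N -> (i.+1 <= n.-1)%N ->
  XS v i * XS v i.+1 * XS v i - XS v i.+1 * XS v i * XS v i.+1 =
  gL i * (gL i.+1 * gL i) - gL i.+1 * (gL i * gL i.+1).
Proof.
move=> i1 i2.
have hi : (1 <= i <= n.-1)%N by rewrite i1 /=; lia.
have hi1 : (1 <= i.+1 <= n.-1)%N by rewrite i2.
have hi' : (0 < i < n)%N by move: hi; rewrite /=; lia.
have hi1' : (0 < i.+1 < n)%N by move: hi1; rewrite /=; lia.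
pose ws := [:: 1; gL i; gL i.+1; gL i * gL i.+1; gL i.+1 * gL i;
               gL i * (gL i.+1 * gL i); gL i.+1 * (gL i * gL i.+1)].
have S0 f : dg f = M ws (slot 0 f) by rewrite -(@Mslot ws 0 f) ?mulr1.
have S1 f : dg f * gL i = M ws (slot 1 f) := @Mslot ws 1 f isT.
have S2 f : dg f * gL i.+1 = M ws (slot 2 f) := @Mslot ws 2 f isT.
have S3 f : dg f * (gL i * gL i.+1) = M ws (slot 3 f) := @Mslot ws 3 f isT.
have S4 f : dg f * (gL i.+1 * gL i) = M ws (slot 4 f) := @Mslot ws 4 f isT.
have S5 f : dg f * (gL i * (gL i.+1 * gL i)) = M ws (slot 5 f) := @Mslot ws 5 f isT.
have S6 f : dg f * (gL i.+1 * (gL i * gL i.+1)) = M ws (slot 6 f) := @Mslot ws 6 f isT.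
have P1 : gL i = M ws (slot 1 (fun _ => 1)) by rewrite -S1 dg1 mul1r.
have P2 : gL i.+1 = M ws (slot 2 (fun _ => 1)) by rewrite -S2 dg1 mul1r.
have P3 : gL i * gL i.+1 = M ws (slot 3 (fun _ => 1)) by rewrite -S3 dg1 mul1r.
have P4 : gL i.+1 * gL i = M ws (slot 4 (fun _ => 1)) by rewrite -S4 dg1 mul1r.
have P5 : gL i * (gL i.+1 * gL i) = M ws (slot 5 (fun _ => 1)) by rewrite -S5 dg1 mul1r.
have P6 : gL i.+1 * (gL i * gL i.+1) = M ws (slot 6 (fun _ => 1)) by rewrite -S6 dg1 mul1r.
rewrite /XS.
rewrite ?(mulrDl, mulrDr, mulrBl, mulrBr, mulNr, mulrN, opprK, mAr, mulr1, mul1r,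
          gD' _ _ hi, gLD _ hi, gD' _ _ hi1, gLD _ hi1, gg' _ hi, gg hi, gg' _ hi1, gg hi1,
          dgM, dgM').
rewrite ?S6 ?S5 ?S4 ?S3 ?S2 ?S1 ?P6 ?P5 ?P4 ?P3 ?P2 ?P1 ?S0.
rewrite ?(MN, MD); apply: eq_M => j k hj.
case: j hj => [|[|[|[|[|[|[|j]]]]]]] // _; rewrite /slot /= /pv /cE /eps ?pos_sw //
  ?(swp_l, swp_n, swp_l1, swp_r1, swp_r i1, swp_pp i1) /= ?(perm_val_eq v);
  move: (nat_of_ord (v (pos k i.-1))) (nat_of_ord (v (pos k i)))
        (nat_of_ord (v (pos k i.+1))) => x1 x2 x3;
  case: (ltngtP x1 x2) => h12; case: (ltngtP x2 x3) => h23; case: (ltngtP x1 x3) => h13;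
  rewrite ?bR0 ?bR1 /=; try (exfalso; lia); ring.
Qed.


Lemma far_gen v i j : (1 <= i <= n.-1)%N -> (1 <= j <= n.-1)%N ->
  (i.+1 < j)%N || (j.+1 < i)%N ->
  XS v i * XS v j - XS v j * XS v i = gL i * gL j - gL j * gL i.
Proof.
move=> hi hj hij.
have hi' : (0 < i < n)%N by move: hi; rewrite /=; lia.
have hj' : (0 < j < n)%N by move: hj; rewrite /=; lia.
have e1 : swp i j.-1 = j.-1 by apply: swp_id; lia.
have e2 : swp i j = j by apply: swp_id; lia.
have e3 : swp j i.-1 = i.-1 by apply: swp_id; lia.
have e4 : swp j i = i by apply: swp_id; lia.
pose ws := [:: 1; gL i; gL j; gL i * gL j; gL j * gL i].
have S0 f : dg f = M ws (slot 0 f) by rewrite -(@Mslot ws 0 f) ?mulr1.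
have S1 f : dg f * gL i = M ws (slot 1 f) := @Mslot ws 1 f isT.
have S2 f : dg f * gL j = M ws (slot 2 f) := @Mslot ws 2 f isT.
have S3 f : dg f * (gL i * gL j) = M ws (slot 3 f) := @Mslot ws 3 f isT.
have S4 f : dg f * (gL j * gL i) = M ws (slot 4 f) := @Mslot ws 4 f isT.
have P1 : gL i = M ws (slot 1 (fun _ => 1)) by rewrite -S1 dg1 mul1r.
have P2 : gL j = M ws (slot 2 (fun _ => 1)) by rewrite -S2 dg1 mul1r.
have P3 : gL i * gL j = M ws (slot 3 (fun _ => 1)) by rewrite -S3 dg1 mul1r.
have P4 : gL j * gL i = M ws (slot 4 (fun _ => 1)) by rewrite -S4 dg1 mul1r.
rewrite /XS.
rewrite ?(mulrDl, mulrDr, mulrBl, mulrBr, mulNr, mulrN, opprK, mAr, mulr1, mul1r,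
          gD' _ _ hi, gLD _ hi, gD' _ _ hj, gLD _ hj, dgM, dgM').
rewrite ?S4 ?S3 ?S2 ?S1 ?P4 ?P3 ?P2 ?P1 ?S0.
rewrite ?(MN, MD); apply: eq_M => m k hm.
case: m hm => [|[|[|[|[|m]]]]] // _; rewrite /slot /= /pv /eps ?pos_sw //
  ?(e1, e2, e3, e4); ring.
Qed.

Lemma relS v : shoji_rel n q u F (tS v) (XS v).
Proof.
have [h1 [h2 [h3 [h4 [h5 [h6 h7]]]]]] := hrel.
split; first by move=> i hi; apply: quadS.
split.
  move=> i hi; rewrite /tS.
  under eq_bigr => a _ do rewrite -dgC dgN dgD.
  rewrite dg_prod -dg0; apply: eq_dg => k.
  by rewrite (bigD1 (v (pos k i.-1))) //= subrr mul0r.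
split.
  move=> i i1 i2; apply/eqP; rewrite -subr_eq0 braid_gen //.
  have := h3 i i1 i2; rewrite -!XS1 => /eqP; rewrite -subr_eq0 braid_gen //.
split.
  move=> i j hi hj hij; apply/eqP; rewrite -subr_eq0 far_gen //.
  by have := h4 i j hi hj hij; rewrite -!XS1 => /eqP; rewrite -subr_eq0 far_gen.
split.
  by move=> i j _ _; rewrite /tS !dgM; apply: eq_dg => k; rewrite mulrC.
split.
  move=> j m hj hm mj mj1; rewrite /XS /tS mulrBl mulrBr gLD // !dgM.
  have hj' : (0 < j < n)%N by move: hj; rewrite /=; lia.
  congr (_ * _ - _); apply: eq_dg => k; last by rewrite mulrC.
  rewrite pos_sw // swp_id //; lia.
move=> J hJ; have hj : (1 <= J.-1 <= n.-1)%N by move: hJ; rewrite /=; lia.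
have hj' : (0 < J.-1 < n)%N by move: hj; rewrite /=; lia.
have j0 : (0 < J.-1)%N by lia.
have EJ : J = J.-1.+1 by lia.
move: hj hj' j0; rewrite EJ /=; set j := J.-1 => hj hj' j0.
rewrite /XS /tS /= corr_dg.
have E1 : dg (fun k => u (v (pos (sw j k) j))) = dg (fun k => u (v (pos k j.-1))).
  by apply: eq_dg => k; rewrite pos_sw // swp_r.
have E2 : dg (fun k => u (v (pos (sw j k) j.-1))) = dg (fun k => u (v (pos k j))).
  by apply: eq_dg => k; rewrite pos_sw // swp_l.
split.
  rewrite mulrBl mulrBr gLD // !dgM E1.
  rewrite -addrA; congr (_ + _); rewrite !dgN dgD; apply: eq_dg => k.
  rewrite /pv /eps; move: (nat_of_ord (v (pos k j.-1))) (nat_of_ord (v (pos k j))) => x y.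
  by case: ltnP => _; rewrite ?bR0 ?bR1; ring.
rewrite mulrBl mulrBr gLD // !dgM E2.
rewrite -addrA; congr (_ + _); rewrite !dgN dgD; apply: eq_dg => k.
rewrite /pv /eps; move: (nat_of_ord (v (pos k j.-1))) (nat_of_ord (v (pos k j))) => x y.
by case: ltnP => _; rewrite ?bR0 ?bR1; ring.
Qed.


Lemma horner_dg a P : horner_alg (dg a) P = dg (fun k => P.[a k]).
Proof.
elim/poly_ind: P => [|P b IH]; first by rewrite rmorph0 -dg0; apply: eq_dg => k; rewrite horner0.
rewrite rmorphD rmorphM /= horner_algX horner_algC IH dgM -dgC dgD.
by apply: eq_dg => k; rewrite hornerMXaddC.
Qed.

Lemma f_horner (f : {lrmorphism A -> A}) x P : f (horner_alg x P) = horner_alg (f x) P.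
Proof.
elim/poly_ind: P => [|P b IH]; first by rewrite !rmorph0.
by rewrite !rmorphD !rmorphM /= !horner_algX !horner_algC IH rmorph_alg.
Qed.

Lemma dg_ind l : dg (fun k => (k == l)%:R) = e l.
Proof.
rewrite /dg (bigD1 l) //= big1 ?addr0 ?eqxx ?scale1r // => k kl.
by rewrite (negbTE kl) scale0r.
Qed.

Lemma map_tupleK (w : {perm 'I_r}) (k : K) : map_tuple (w^-1)%g (map_tuple w k) = k.
Proof. by apply: eq_from_tnth => p; rewrite !tnth_map permK. Qed.
Lemma map_tupleKV (w : {perm 'I_r}) (k : K) : map_tuple w (map_tuple (w^-1)%g k) = k.
Proof. by apply: eq_from_tnth => p; rewrite !tnth_map permKV. Qed.

Section Phi.
Variables (w : {perm 'I_r}) (f : {lrmorphism A -> A}).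
Hypotheses (ft : forall i, (1 <= i <= n)%N -> f (t i) = tS w i)
           (fT : forall j, (1 <= j <= n.-1)%N -> f (T j) = XS w j).

Lemma fD x y : f (x + y) = f x + f y. Proof. exact: rmorphD. Qed.
Lemma fB x y : f (x - y) = f x - f y. Proof. exact: rmorphB. Qed.
Lemma fM x y : f (x * y) = f x * f y. Proof. exact: rmorphM. Qed.

Lemma f_e (k : K) : f (e k) = e (map_tuple (w^-1)%g k).
Proof.
rewrite bkE (big_morph f (rmorphM f) (rmorph1 f)).
rewrite (eq_bigr (fun p : 'I_n => dg (fun l => (Lp (pos k p)).[u (w (pos l p))]))); last first.
  move=> p _; rewrite /Lt f_horner ft; last by rewrite ltnS ltn_ord.
  by rewrite /tS horner_dg.
rewrite dg_prod -dg_ind; apply: eq_dg => l /=.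
under eq_bigr => p _ do rewrite Lp_val.
case: (eqVneq l (map_tuple (w^-1)%g k)) => [->|ne].
  by rewrite big1 // => p _; rewrite pos_map // permKV eqxx.
have [p hp hne] := neq_pos ne.
rewrite (bigD1 (Ordinal hp)) //= pos_map // in hne *.
have -> : (pos k p == w (pos l p)) = false.
  by apply: negbTE; apply: contraNN hne => /eqP ->; rewrite permK.
by rewrite mul0r.
Qed.

Lemma f_dg a : f (dg a) = dg (fun k => a (map_tuple w k)).
Proof.
rewrite /dg linear_sum /=.
rewrite [RHS](reindex_inj (can_inj (@map_tupleKV w))) /=.
apply: eq_bigr => k _; by rewrite linearZ /= f_e map_tupleKV.
Qed.

Lemma f_tS w' i : (1 <= i <= n)%N -> f (tS w' i) = tS (w * w')%g i.
Proof.
move=> hi; rewrite /tS f_dg; apply: eq_dg => k; rewrite pos_map ?permM //.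
by case/andP: hi; case: i.
Qed.

Lemma pv_map w' j k : (1 <= j <= n.-1)%N -> pv w' j (map_tuple w k) = pv (w * w')%g j k.
Proof.
move=> hj; rewrite /pv /eps !pos_map ?permM //; move: hj; rewrite /=; lia.
Qed.

Lemma f_g j : (1 <= j <= n.-1)%N -> f (gL j) = gL j.
Proof.
move=> hj; have E : gL j = T j + dg (pv 1 j) by rewrite -XS1 /XS subrK.
rewrite {1}E fD fT // f_dg /XS (@eq_dg _ (pv w j)) ?subrK // => k.
by rewrite pv_map // mulg1.
Qed.

Lemma f_XS w' j : (1 <= j <= n.-1)%N -> f (XS w' j) = XS (w * w')%g j.
Proof.
move=> hj; rewrite /XS fB f_g // f_dg; congr (_ - _); apply: eq_dg => k.
exact: pv_map.
Qed.
End Phi.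


Lemma final_sec
  (U : forall (B : algType R) (tB TB : nat -> B), shoji_rel n q u F tB TB ->
    exists f : {lrmorphism A -> B},
      [/\ (forall i, (1 <= i <= n)%N -> f (t i) = tB i),
          (forall i, (1 <= i <= n.-1)%N -> f (T i) = TB i) &
          forall g : {lrmorphism A -> B},
            (forall i, (1 <= i <= n)%N -> g (t i) = tB i) ->
            (forall i, (1 <= i <= n.-1)%N -> g (T i) = TB i) -> g =1 f]) :
  exists phi : 'S_r -> {lrmorphism A -> A},
    [/\ forall sigma, bijective (phi sigma),
        forall sigma (k : K) (w : 'S_n) (s : seq nat),
          reduced_expr s w ->
          phi sigma (bk u t k * gword n q u t T s)
            = bk u t (map_tuple sigma k) * gword n q u t T s,
        phi 1%g =1 id &
        forall sigma tau, phi (sigma * tau)%g =1 phi tau \o phi sigma].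
Proof.
pose P (sigma : 'S_r) (f : {lrmorphism A -> A}) :=
      [/\ (forall i, (1 <= i <= n)%N -> f (t i) = tS (sigma^-1)%g i),
          (forall i, (1 <= i <= n.-1)%N -> f (T i) = XS (sigma^-1)%g i) &
          forall g : {lrmorphism A -> A},
            (forall i, (1 <= i <= n)%N -> g (t i) = tS (sigma^-1)%g i) ->
            (forall i, (1 <= i <= n.-1)%N -> g (T i) = XS (sigma^-1)%g i) -> g =1 f].
have ex : forall sigma : 'S_r, exists f, P sigma f.
  by move=> sigma; apply: U; apply: relS.
have [phi hphi] : {phi : 'S_r -> {lrmorphism A -> A} | forall sigma, P sigma (phi sigma)}.
  exists (fun sigma => proj1_sig (constructive_indefinite_description _ (ex sigma))).
  by move=> sigma; exact: (proj2_sig (constructive_indefinite_description _ (ex sigma))).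
have comp sigma tau : phi (sigma * tau)%g =1 phi tau \o phi sigma.
  move=> x; have [_ _ un] := hphi (sigma * tau)%g.
  have [ft fT _] := hphi sigma; have [ft' fT' _] := hphi tau.
  symmetry; apply: (un (phi tau \o phi sigma)) => i hi /=.
    by rewrite ft // (f_tS ft') // invMg.
  by rewrite fT // (f_XS ft' fT') // invMg.
have id1 : phi 1%g =1 id.
  move=> x; have [_ _ un] := hphi 1%g; symmetry; apply: (un idfun) => i hi /=.
    by rewrite invg1 tS1.
  by rewrite invg1 XS1.
exists phi; split => //.
- move=> sigma; exists (phi (sigma^-1)%g) => x.
    by rewrite -[RHS]id1 -(mulgV sigma) comp.
  by rewrite -[RHS]id1 -(mulVg sigma) comp.
- move=> sigma k w s [[hs _] _].
  have [ft fT _] := hphi sigma.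
  rewrite fM (f_e ft) invgK; congr (_ * _).
  rewrite /gword (big_morph (phi sigma) (fM _) (rmorph1 (phi sigma))).
  apply: eq_big_seq => i his; have /andP[i0 iN] := allP hs i his.
  rewrite -!gLE (f_g ft fT) //; rewrite i0 /=; lia.
Qed.

End S.

Unset Implicit Arguments.

Theorem proposition5p1 (R : idomainType) (n r : nat) (q : R) (u : 'I_r -> R)
    (F : 'I_r -> {poly R}) (A : algType R) (t T : nat -> A) :
  (0 < n)%N -> (0 < r)%N ->
  q \is a GRing.unit -> Delta u \is a GRing.unit ->
  (forall c, (size (F c) <= r)%N) ->
  (forall c c', (F c).[u c'] = (c == c')%:R * Delta u) ->
  shoji_universal n q u F t T ->
  exists phi : 'S_r -> {lrmorphism A -> A},
    [/\ forall sigma, bijective (phi sigma),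
        forall sigma (k : n.-tuple 'I_r) (w : 'S_n) (s : seq nat),
          reduced_expr s w ->
          phi sigma (bk u t k * gword n q u t T s)
            = bk u t (map_tuple sigma k) * gword n q u t T s,
        phi 1%g =1 id &
        forall sigma tau, phi (sigma * tau)%g =1 phi tau \o phi sigma].
Proof.
case: n => // n'; case: r u F => // r' u F _ _ Uq UD _ hF [hrel U].
exact: (final_sec Uq UD hF hrel U).
Qed.
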